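(* Let $g$ be a real $M\times M$ matrix, $g\neq 0$, all of whose singular values are equal (i.e. the largest singular value has multiplicity $d=M$). Then there exist finite-dimensional Hilbert spaces $\mathcal H_1,\mathcal H_2$, a state $\rho$ on $\mathcal H_1\otimes\mathcal H_2$ and observables $\mathcal A_i(x)$, $x=1,\dots,M$ (Hermitian, eigenvalues in $[-1,1]$) with $\sum_{x_1,x_2=1}^M g_{x_1,x_2}\operatorname{tr}(\rho\,\mathcal A_1(x_1)\otimes\mathcal A_2(x_2))=M\,\|g\|_2$; i.e. the bound $\sqrt{M_1M_2}\|g\|_2$ of Theorem 1 is attained.
   Context: $\|g\|_2$ denotes the largest singular value of $g$. *)

(* Defs.v *)
(* complex Hilbert spaces C^n over a numClosedFieldType C
   (e.g. algebraic complex numbers algC, or the complex numbers). *)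
From HB Require Import structures.
From mathcomp Require Import all_boot all_order all_algebra.
Set Implicit Arguments. Unset Strict Implicit. Unset Printing Implicit Defensive.
Import Order.TTheory GRing.Theory Num.Theory.
Local Open Scope ring_scope.

Section Defs.
Context {C : numClosedFieldType}.

Definition adjmx m n (A : 'M[C]_(m, n)) : 'M[C]_(n, m) := map_mx Num.conj (A^T).

Definition hermitian n (A : 'M[C]_n) : Prop := adjmx A = A.

Definition observable n (A : 'M[C]_n) : Prop :=
  hermitian A /\ forall a, eigenvalue A a -> (-1 <= a <= 1).

Definition psd n (A : 'M[C]_n) : Prop :=
  hermitian A /\ forall a, eigenvalue A a -> 0 <= a.

Definition is_state n (rho : 'M[C]_n) : Prop := psd rho /\ \tr rho = 1.

(* decomposition of an index of C^(m*n) = C^m (x) C^n into a pair of indices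
   (lexicographic, the inverse of mxvec_index) *)
Definition unpair_idx m n (k : 'I_(m * n)) : 'I_m * 'I_n :=
  enum_val (cast_ord (esym (mxvec_cast m n)) k).

Definition tensmx m n (A : 'M[C]_m) (B : 'M[C]_n) : 'M[C]_(m * n) :=
  \matrix_(k, l) (A (unpair_idx k).1 (unpair_idx l).1
                  * B (unpair_idx k).2 (unpair_idx l).2).

Definition singular_value m (g : 'M[C]_m) (s : C) : Prop :=
  0 <= s /\ eigenvalue (adjmx g *m g) (s ^+ 2).

Definition spec_norm m (g : 'M[C]_m) (s : C) : Prop :=
  singular_value g s /\ forall t, singular_value g t -> t <= s.

End Defs.

(* Main.v *)
Require Import Defs.
From HB Require Import structures.
From mathcomp Require Import all_boot all_order all_algebra.
Import Order.TTheory GRing.Theory Num.Theory.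
Local Open Scope ring_scope.
Set Implicit Arguments. Unset Strict Implicit.


Lemma adjmxE {C : numClosedFieldType} m n (A : 'M[C]_(m,n)) i j : adjmx A i j = (A j i)^*.
Proof. by rewrite !mxE. Qed.

Lemma adjmxK {C : numClosedFieldType} m n (A : 'M[C]_(m,n)) : adjmx (adjmx A) = A.
Proof. by apply/matrixP => i j; rewrite !adjmxE conjCK. Qed.

Lemma adjmxM {C : numClosedFieldType} m n p (A : 'M[C]_(m,n)) (B : 'M[C]_(n,p)) :
  adjmx (A *m B) = adjmx B *m adjmx A.
Proof. by rewrite /adjmx trmx_mul map_mxM. Qed.

Lemma adjmxD {C : numClosedFieldType} m n (A B : 'M[C]_(m,n)) :
  adjmx (A + B) = adjmx A + adjmx B.
Proof. by rewrite /adjmx linearD /= map_mxD. Qed.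

Lemma adjmxZ {C : numClosedFieldType} m n (a : C) (A : 'M[C]_(m,n)) :
  adjmx (a *: A) = a^* *: adjmx A.
Proof. by rewrite /adjmx linearZ /= map_mxZ. Qed.

Lemma adjmxN {C : numClosedFieldType} m n (A : 'M[C]_(m,n)) :
  adjmx (- A) = - adjmx A.
Proof. by rewrite /adjmx linearN /= map_mxN. Qed.

Lemma adjmx0 {C : numClosedFieldType} m n : adjmx (0 : 'M[C]_(m,n)) = 0.
Proof. by rewrite /adjmx trmx0 map_mx0. Qed.

Lemma adjmx1 {C : numClosedFieldType} n : adjmx (1%:M : 'M[C]_n) = 1%:M.
Proof. by rewrite /adjmx trmx1 map_mx1. Qed.

Lemma adjmx_sum {C : numClosedFieldType} m n (I : finType) (F : I -> 'M[C]_(m,n)) :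
  adjmx (\sum_i F i) = \sum_i adjmx (F i).
Proof. by rewrite /adjmx linear_sum /= map_mx_sum. Qed.

Lemma adjmx_block {C : numClosedFieldType} m1 m2 n1 n2 (a : 'M[C]_(m1,n1)) (b : 'M[C]_(m1,n2))
  (c : 'M[C]_(m2,n1)) (d : 'M[C]_(m2,n2)) :
  adjmx (block_mx a b c d) = block_mx (adjmx a) (adjmx c) (adjmx b) (adjmx d).
Proof. by rewrite /adjmx tr_block_mx map_block_mx. Qed.

Lemma adj_mul_eq0 {C : numClosedFieldType} m n (A : 'M[C]_(m,n)) : adjmx A *m A = 0 -> A = 0.
Proof.
move=> H; have T : \tr (adjmx A *m A) = 0 by rewrite H linear0.
have E : \tr (adjmx A *m A) = \sum_i \sum_j `|A j i| ^+ 2.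
  by rewrite /mxtrace; apply: eq_bigr => i _; rewrite mxE; apply: eq_bigr => j _; rewrite adjmxE normCKC.
rewrite E in T; apply/matrixP => j i; rewrite mxE.
have T2 := psumr_eq0P (fun i _ => sumr_ge0 _ (fun j _ => exprn_ge0 2 (normr_ge0 (A j i)))) T.
have T3 := psumr_eq0P (fun j _ => exprn_ge0 2 (normr_ge0 (A j i))) (T2 i isT).
by move/eqP: (T3 j isT); rewrite sqrf_eq0 normr_eq0 => /eqP.
Qed.


Lemma adjmxX {C : numClosedFieldType} n (K : 'M[C]_n) k :
  adjmx K = K -> adjmx (K ^+ k) = K ^+ k.
Proof.
move=> hK. elim: k => [|k IH].
  by rewrite expr0 -idmxE adjmx1.
by rewrite exprS -mulmxE adjmxM IH hK mulmxE -exprSr exprS.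
Qed.

Lemma herm_nil {C : numClosedFieldType} n (K : 'M[C]_n) k :
  adjmx K = K -> K ^+ k.+1 = 0 -> K = 0.
Proof.
move=> hK. elim: k => [|k IH].
  by rewrite expr1.
move=> h; apply: IH; apply: adj_mul_eq0.
by rewrite adjmxX // mulmxE -exprD addSn -addnS exprD h mulr0.
Qed.

Lemma dot_self {C : numClosedFieldType} n (u : 'rV[C]_n) :
  (u *m adjmx u) 0 0 = \sum_j `|u 0 j| ^+ 2.
Proof. by rewrite mxE; apply: eq_bigr => j _; rewrite adjmxE normCK. Qed.

Lemma dot_self_gt0 {C : numClosedFieldType} n (u : 'rV[C]_n) :
  u != 0 -> 0 < (u *m adjmx u) 0 0.
Proof.
move=> nz; rewrite dot_self lt_def sumr_ge0 ?andbT; last by move=> j _; exact: exprn_ge0.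
apply/eqP => S; case/eqP: nz; apply/matrixP => i j; rewrite ord1 mxE.
have := psumr_eq0P (fun j _ => exprn_ge0 2 (normr_ge0 (u 0 j))) S (i:=j) isT.
by move/eqP; rewrite sqrf_eq0 normr_eq0 => /eqP.
Qed.

Lemma eig_gram_ge0 {C : numClosedFieldType} n (g : 'M[C]_n) a :
  eigenvalue (adjmx g *m g) a -> 0 <= a.
Proof.
case/eigenvalueP => v hv nz.
have E : (v *m adjmx g) *m adjmx (v *m adjmx g) = a *: (v *m adjmx v).
  by rewrite adjmxM adjmxK !mulmxA -(mulmxA v) hv scalemxAl.
have P := dot_self_gt0 nz.
have Q : 0 <= ((v *m adjmx g) *m adjmx (v *m adjmx g)) 0 0.
  by rewrite dot_self sumr_ge0 // => j _; exact: exprn_ge0.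
rewrite E mxE in Q.
by rewrite -(pmulr_lge0 _ P).
Qed.


Lemma adjmx_scalar {C : numClosedFieldType} n (a : C) : adjmx (a%:M : 'M_n) = a^*%:M.
Proof. by rewrite -scalemx1 adjmxZ adjmx1 scalemx1. Qed.

Lemma herm_eig0 {C : numClosedFieldType} n (K : 'M[C]_n.+1) :
  adjmx K = K -> (forall a, eigenvalue K a -> a = 0) -> K = 0.
Proof.
move=> hK eK.
have [r Hr] := closed_field_poly_normal (char_poly K).
rewrite (monicP (char_poly_monic K)) scale1r in Hr.
have Hr' : char_poly K = \prod_(z <- r) 'X.
  rewrite Hr; apply: eq_big_seq => z zr; suff -> : z = 0 by rewrite subr0.
  by apply: eK; rewrite eigenvalue_root_char Hr root_prod_XsubC.
have CH := Cayley_Hamilton K.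
rewrite Hr' big_const_seq in CH.
have X : forall k, horner_mx K (iter k (GRing.mul 'X) 1) = K ^+ k.
  elim => [|k IH] /=; first by rewrite rmorph1 expr0.
  by rewrite rmorphM /= horner_mx_X IH exprS.
rewrite X in CH.
case: (count _ _) CH => [|k] CH.
  by rewrite expr0 in CH; rewrite -[K]mulr1 CH mulr0.
exact: herm_nil hK CH.
Qed.

Lemma gram_scalar {C : numClosedFieldType} n (g : 'M[C]_n) s :
  (forall t t', singular_value g t -> singular_value g t' -> t = t') ->
  spec_norm g s -> adjmx g *m g = (s ^+ 2)%:M.
Proof.
move=> U [[s0 es] _].
case: n g U es => [|n] g U es; first by apply/matrixP => [[]].
have eH : forall a, eigenvalue (adjmx g *m g) a -> a = s ^+ 2.
  move=> a ea; have sv : singular_value g (sqrtC a).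
    by split; [rewrite sqrtC_ge0; exact: eig_gram_ge0 ea | rewrite sqrtCK].
  have st : sqrtC a = s by apply: U sv _; split.
  by rewrite -st sqrtCK.
have sreal : (s ^+ 2)^* = s ^+ 2 by rewrite rmorphXn /= conj_Creal // ger0_real.
apply/eqP; rewrite -subr_eq0; apply/eqP; apply: herm_eig0.
  by rewrite adjmxD adjmxN adjmxM adjmxK adjmx_scalar sreal.
move=> a /eigenvalueP [v hv nz].
have : eigenvalue (adjmx g *m g) (a + s ^+ 2).
  apply/eigenvalueP; exists v => //.
  have -> : adjmx g *m g = (adjmx g *m g - (s ^+ 2)%:M) + (s ^+ 2)%:M by rewrite subrK.
  by rewrite mulmxDr hv mul_mx_scalar scalerDl.
by move/eH => /(congr1 (fun x => x - s ^+ 2)); rewrite addrK subrr.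
Qed.


Fixpoint dd (m : nat) : nat := if m is m'.+1 then (dd m' + dd m')%N else 1%N.

Fixpoint cl {C : numClosedFieldType} (m : nat) : nat -> 'M[C]_(dd m) :=
  match m return nat -> 'M[C]_(dd m) with
  | 0 => fun _ => 1%:M
  | m'.+1 => fun k => if (k < m')%N then block_mx (cl m' k) 0 0 (- cl m' k)
                      else block_mx 0 1%:M 1%:M 0
  end.

Lemma dd_gt0 m : (0 < dd m)%N.
Proof. by elim: m => //= m IH; rewrite addn_gt0 IH. Qed.

Lemma cl_herm {C : numClosedFieldType} m k : adjmx (@cl C m k) = cl m k.
Proof.
elim: m k => [|m IH] k /=; first exact: adjmx1.
case: ifP => _; rewrite adjmx_block ?adjmx0 ?adjmx1 //.
by rewrite adjmxN IH.
Qed.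

Lemma cl_sq {C : numClosedFieldType} m k : @cl C m k *m cl m k = 1%:M.
Proof.
elim: m k => [|m IH] k /=; first by rewrite mul1mx.
case: ifP => _; rewrite mulmx_block !mulmx0 !mul0mx ?mul1mx ?mulmx1 !addr0 ?add0r.
  by rewrite mulmxN mulNmx opprK IH -scalar_mx_block.
by rewrite -scalar_mx_block.
Qed.

Lemma cl_anti {C : numClosedFieldType} m k l : (k < m)%N -> (l < m)%N -> k != l ->
  @cl C m k *m cl m l = - (cl m l *m cl m k).
Proof.
elim: m k l => [|m IH] k l hk hl kl; first by [].
rewrite [cl m.+1 k]/= [cl m.+1 l]/=.
have [hkm|hkm] := ltnP k m; have [hlm|hlm] := ltnP l m.
- rewrite !mulmx_block !mulmx0 !mul0mx !addr0 !add0r opp_block_mx oppr0.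
  by rewrite !mulmxN !mulNmx !opprK (IH k l).
- rewrite !mulmx_block !mulmx0 !mul0mx !mul1mx !mulmx1 !addr0 !add0r opp_block_mx !oppr0.
  by rewrite opprK.
- rewrite !mulmx_block !mulmx0 !mul0mx !mul1mx !mulmx1 !addr0 !add0r opp_block_mx !oppr0.
  by rewrite opprK.
- exfalso; have ek : k = m by apply/eqP; rewrite eqn_leq hkm -ltnS hk.
  have el : l = m by apply/eqP; rewrite eqn_leq hlm -ltnS hl.
  by move: kl; rewrite ek el eqxx.
Qed.


Lemma unpair_bij m n : bijective (@unpair_idx m n).
Proof.
exists (fun p => cast_ord (mxvec_cast m n) (enum_rank p)) => k.
  by rewrite /unpair_idx enum_valK cast_ordKV.
by rewrite /unpair_idx cast_ordK enum_rankK.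
Qed.

Lemma sum_unpair {R : nmodType} m n (F : 'I_m * 'I_n -> R) :
  \sum_(k < m * n) F (unpair_idx k) = \sum_(i < m) \sum_(j < n) F (i, j).
Proof.
rewrite pair_big /=; symmetry.
rewrite (reindex (@unpair_idx m n)) /=; last exact: onW_bij (unpair_bij m n).
by apply: eq_bigr => k _; case: (unpair_idx k).
Qed.

Lemma sum_delta {K : pzSemiRingType} n (i : 'I_n) (F : 'I_n -> K) :
  \sum_(j < n) (i == j)%:R * F j = F i.
Proof.
rewrite (bigD1 i) //= eqxx mul1r big1 ?addr0 // => j ji.
by rewrite eq_sym (negbTE ji) mul0r.
Qed.

Definition dlt {C : numClosedFieldType} N (k : 'I_(N * N)) : C :=
  ((unpair_idx k).1 == (unpair_idx k).2)%:R.
Definition phi {C : numClosedFieldType} N : 'rV[C]_(N * N) := \row_k dlt k.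
Definition rho {C : numClosedFieldType} N : 'M[C]_(N * N) := N%:R^-1 *: ((phi N)^T *m phi N).

Lemma rhoE {C : numClosedFieldType} N k l : @rho C N k l = N%:R^-1 * (dlt k * dlt l).
Proof. by rewrite !mxE big_ord1 !mxE. Qed.

Lemma tr_rho {C : numClosedFieldType} N (A B : 'M[C]_N) :
  \tr (rho N *m tensmx A B) = N%:R^-1 * \tr (A^T *m B).
Proof.
have E1 : \tr (rho N *m tensmx A B) = N%:R^-1 *
   \sum_(k < N * N) \sum_(l < N * N)
     (fun p q : 'I_N * 'I_N => (p.1 == p.2)%:R * ((q.1 == q.2)%:R * (A q.1 p.1 * B q.2 p.2)))
       (unpair_idx k) (unpair_idx l).
  rewrite /mxtrace mulr_sumr; apply: eq_bigr => k _.
  rewrite mxE mulr_sumr; apply: eq_bigr => l _.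
  by rewrite rhoE !mxE /dlt !mulrA.
rewrite E1; congr (_ * _).
rewrite (eq_bigr (fun k => \sum_(i < N) \sum_(j < N)
     (fun p q : 'I_N * 'I_N => (p.1 == p.2)%:R * ((q.1 == q.2)%:R * (A q.1 p.1 * B q.2 p.2)))
       (unpair_idx k) (i, j))); last first.
  by move=> k _; rewrite (sum_unpair (fun q => (fun p q : 'I_N * 'I_N => (p.1 == p.2)%:R * ((q.1 == q.2)%:R * (A q.1 p.1 * B q.2 p.2))) (unpair_idx k) q)).
rewrite (sum_unpair (fun p => \sum_(i < N) \sum_(j < N)
     (fun p q : 'I_N * 'I_N => (p.1 == p.2)%:R * ((q.1 == q.2)%:R * (A q.1 p.1 * B q.2 p.2))) p (i, j))) /=.
rewrite /mxtrace; apply: eq_bigr => i1 _.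
rewrite (eq_bigr (fun j1 => (i1 == j1)%:R * \sum_(i < N) \sum_(j < N) ((i == j)%:R * (A i i1 * B j j1)))); last first.
  by move=> j1 _; rewrite mulr_sumr; apply: eq_bigr => i _; rewrite mulr_sumr.
rewrite (sum_delta i1 (fun j1 => \sum_(i < N) \sum_(j < N) ((i == j)%:R * (A i i1 * B j j1)))).
rewrite mxE; apply: eq_bigr => i _.
by rewrite (sum_delta i (fun j => A i i1 * B j i1)) mxE.
Qed.

Lemma dlt_sq {C : numClosedFieldType} N k : @dlt C N k * dlt k = dlt k.
Proof. by rewrite /dlt; case: (_ == _); rewrite ?mul1r ?mul0r. Qed.

Lemma sum_dlt {C : numClosedFieldType} N : \sum_(k < N * N) @dlt C N k = N%:R.
Proof.
rewrite /dlt (sum_unpair (fun p : 'I_N * 'I_N => (p.1 == p.2)%:R)) /=.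
rewrite (eq_bigr (fun _ => 1)); last first.
  by move=> i _; rewrite -[RHS](sum_delta i (fun _ => 1)); apply: eq_bigr => j _; rewrite mulr1.
by rewrite sumr_const card_ord.
Qed.

Lemma phi_phiT {C : numClosedFieldType} N : phi N *m (phi N)^T = (N%:R : C)%:M.
Proof.
apply/matrixP => i j; rewrite !ord1 !mxE eqxx mulr1n -(sum_dlt N).
by apply: eq_bigr => k _; rewrite !mxE dlt_sq.
Qed.

Lemma rho_state {C : numClosedFieldType} N : (0 < N)%N -> is_state (@rho C N).
Proof.
move=> N0; have Nn0 : (N%:R : C) != 0 by rewrite pnatr_eq0 -lt0n.
have herm : Defs.hermitian (@rho C N).
  rewrite /Defs.hermitian; apply/matrixP => i j; rewrite adjmxE !rhoE conj_Creal; first by rewrite (mulrC (dlt j)).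
  by apply: ger0_real; rewrite mulr_ge0 ?invr_ge0 ?ler0n // /dlt mulr_ge0 ?ler0n.
split; first split => //.
  move=> a /eigenvalueP [v hv nz].
  have E : a *: (v *m (phi N)^T) = v *m (phi N)^T.
    rewrite scalemxAl -hv /rho -scalemxAr -scalemxAl !mulmxA -(mulmxA (v *m (phi N)^T)) phi_phiT.
    by rewrite mul_mx_scalar scalerA mulVf // scale1r.
  have : (a - 1) *: (v *m (phi N)^T) = 0 by rewrite scalerBl E scale1r subrr.
  move/eqP; rewrite scaler_eq0 => /orP [|/eqP w0]; first by rewrite subr_eq0 => /eqP ->; exact: ler01.
  move: hv; rewrite /rho -scalemxAr mulmxA w0 mul0mx scaler0 => /esym/eqP.
  by rewrite scaler_eq0 (negbTE nz) orbF => /eqP ->.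
rewrite /rho mxtraceZ mxtrace_mulC phi_phiT mxtrace_scalar mulr1n mulVf //.
Qed.


Lemma obs_sq {C : numClosedFieldType} n (A : 'M[C]_n) :
  adjmx A = A -> A *m A = 1%:M -> observable A.
Proof.
move=> hA sA; split => // a /eigenvalueP [v hv nz].
have E : (a ^+ 2 - 1) *: v = 0.
  by rewrite scalerBl scale1r expr2 -scalerA -hv scalemxAl -hv -mulmxA sA mulmx1 subrr.
move: E => /eqP; rewrite scaler_eq0 (negbTE nz) orbF subr_eq0 sqrf_eq1.
case/orP => /eqP ->; rewrite ?lexx ?andbT //.
- by rewrite (le_trans (lerN10 _)) ?ler01.
- by rewrite (le_trans (lerN10 _)) ?ler01.
Qed.

Lemma sum_delta' {K : pzSemiRingType} n (i : 'I_n) (F : 'I_n -> K) :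
  \sum_(j < n) (i == j)%:R * F j = F i.
Proof.
rewrite (bigD1 i) //= eqxx mul1r big1 ?addr0 // => j ji.
by rewrite eq_sym (negbTE ji) mul0r.
Qed.

Lemma sum_deltaZ {K : pzRingType} {V : lmodType K} n (i : 'I_n) (F : 'I_n -> V) :
  \sum_(j < n) (i == j)%:R *: F j = F i.
Proof.
rewrite (bigD1 i) //= eqxx scale1r big1 ?addr0 // => j ji.
by rewrite eq_sym (negbTE ji) scale0r.
Qed.


Lemma cliff_sum_sq {C : numClosedFieldType} M N (G : 'I_M -> 'M[C]_N) (c : 'I_M -> C) :
  (forall x, G x *m G x = 1%:M) ->
  (forall x x', x != x' -> G x *m G x' = - (G x' *m G x)) ->
  (\sum_x c x *: G x) *m (\sum_x c x *: G x) = (\sum_x c x ^+ 2) *: 1%:M.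
Proof.
move=> Hsq Han.
have anti x x' : G x *m G x' + G x' *m G x = (x == x')%:R *: (1%:M *+ 2).
  case: eqVneq => [<-|ne]; first by rewrite Hsq scale1r mulr2n.
  by rewrite Han // addNr scale0r.
set S := \sum_x \sum_x' (c x * c x') *: (G x *m G x').
have E1 : (\sum_x c x *: G x) *m (\sum_x c x *: G x) = S.
  rewrite mulmx_suml; apply: eq_bigr => x _; rewrite mulmx_sumr; apply: eq_bigr => x' _.
  by rewrite -scalemxAl -scalemxAr scalerA.
have E2 : S = \sum_x \sum_x' (c x * c x') *: (G x' *m G x).
  rewrite /S exchange_big /=; apply: eq_bigr => x _; apply: eq_bigr => x' _.
  by rewrite mulrC.
have E3 : S + S = (\sum_x c x ^+ 2) *: (1%:M *+ 2).
  rewrite {2}E2 /S -big_split /= scaler_suml.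
  apply: eq_bigr => x _; rewrite -big_split /=.
  rewrite (eq_bigr (fun x' => (x == x')%:R *: ((c x * c x') *: (1%:M *+ 2)))); last first.
    by move=> x' _; rewrite -scalerDr anti !scalerA mulrC.
  by rewrite (sum_deltaZ x (fun x' => (c x * c x') *: (1%:M *+ 2))) expr2.
rewrite E1; have := congr1 (fun Y => (2%:R : C)^-1 *: Y) E3.
by rewrite -mulr2n -!scaler_nat !scalerA mulVf ?pnatr_eq0 // scale1r mulrCA mulVf ?pnatr_eq0 // mulr1.
Qed.

Lemma cliff_tr {C : numClosedFieldType} M N (G : 'I_M -> 'M[C]_N) (c : 'I_M -> C) x :
  (forall x, G x *m G x = 1%:M) ->
  (forall x x', x != x' -> G x *m G x' = - (G x' *m G x)) ->
  \tr (G x *m \sum_x' c x' *: G x') = c x * N%:R.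
Proof.
move=> Hsq Han.
have T x' : \tr (G x *m G x') = (x == x')%:R * N%:R.
  case: eqVneq => [<-|ne]; first by rewrite Hsq mxtrace1 mul1r.
  rewrite mul0r; have h := congr1 mxtrace (Han _ _ ne).
  rewrite linearN /= mxtrace_mulC in h.
  have : (2%:R : C) * \tr (G x' *m G x) = 0 by rewrite mulr2n mulrDl !mul1r {1}h addNr.
  by move/eqP; rewrite mulf_eq0 pnatr_eq0 /= mxtrace_mulC => /eqP.
rewrite mulmx_sumr linear_sum /=.
rewrite (eq_bigr (fun x' => (x == x')%:R * (c x' * N%:R))); last first.
  by move=> x' _; rewrite -scalemxAr mxtraceZ T mulrCA.
exact: (sum_delta' x (fun x' => c x' * N%:R)).
Qed.



Lemma adjmx_tr {C : numClosedFieldType} n (A : 'M[C]_n) : adjmx A^T = (adjmx A)^T.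
Proof. by apply/matrixP => i j; rewrite !mxE. Qed.

Unset Implicit Arguments.
Theorem corollary2 (C : numClosedFieldType) (M : nat) (g : 'M[C]_M) (s : C) :
  g \is a mxOver Num.real ->
  g != 0 ->
  (forall t t', singular_value g t -> singular_value g t' -> t = t') ->
  spec_norm g s ->
  exists (n1 n2 : nat) (rho : 'M[C]_(n1 * n2)) (A1 A2 : 'I_M -> 'M[C]_(_)),
    is_state rho /\
    (forall x, observable (A1 x : 'M[C]_n1)) /\
    (forall x, observable (A2 x : 'M[C]_n2)) /\
    \sum_(x1 < M) \sum_(x2 < M)
        g x1 x2 * \tr (rho *m tensmx (A1 x1) (A2 x2)) = M%:R * s.
Proof.
move=> greal gnz U sn.
have Hg := gram_scalar U sn.
case: sn => [[s0 _] _].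
have sreal : s \is Num.real := ger0_real s0.
have snz : s != 0.
  apply/eqP => s00; case/eqP: gnz; apply: adj_mul_eq0; rewrite Hg s00 expr2 mulr0.
  by apply/matrixP => i j; rewrite !mxE mul0rn.
have gr x y : g x y \is Num.real by exact: (mxOverP greal x y).
have col y : \sum_x g x y ^+ 2 = s ^+ 2.
  have := congr1 (fun A : 'M[C]_M => A y y) Hg; rewrite /= !mxE eqxx mulr1n => <-.
  by apply: eq_bigr => x _; rewrite adjmxE conj_Creal // expr2.
pose N := dd M.
pose G (x : 'I_M) := @cl C M x.
pose c (x y : 'I_M) := g x y / s.
have creal x y : (c x y)^* = c x y by rewrite conj_Creal // rpredM ?rpredV.
have Gsq x : G x *m G x = 1%:M by exact: cl_sq.
have Gan x x' : x != x' -> G x *m G x' = - (G x' *m G x).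
  by move=> ne; apply: cl_anti => //.
exists N, N, (rho N), (fun x => (G x)^T), (fun y => \sum_x c x y *: G x).
split; first exact: rho_state (dd_gt0 M).
split.
  move=> x; apply: obs_sq; first by rewrite adjmx_tr cl_herm.
  by rewrite -trmx_mul Gsq trmx1.
split.
  move=> y; apply: obs_sq.
    rewrite adjmx_sum; apply: eq_bigr => x _.
    by rewrite adjmxZ creal cl_herm.
  rewrite (cliff_sum_sq (fun x => c x y) Gsq Gan).
  rewrite (eq_bigr (fun x => g x y ^+ 2 / s ^+ 2)); last by move=> x _; rewrite expr_div_n.
  by rewrite -mulr_suml col mulfV ?expf_neq0 // scale1r.
rewrite (eq_bigr (fun x1 => \sum_(x2 < M) g x1 x2 * c x1 x2)); last first.
  move=> x1 _; apply: eq_bigr => x2 _; congr (_ * _).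
  rewrite tr_rho trmxK (cliff_tr (fun x => c x x2) x1 Gsq Gan).
  by rewrite mulrCA mulVf ?mulr1 // pnatr_eq0 -lt0n dd_gt0.
rewrite exchange_big /=.
rewrite (eq_bigr (fun _ => s)); last first.
  move=> y _; rewrite /c.
  rewrite (eq_bigr (fun x => g x y ^+ 2 / s)); last by move=> x _; rewrite mulrA expr2.
  by rewrite -mulr_suml col expr2 mulfK.
by rewrite sumr_const card_ord mulr_natl.
Qed.
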